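(* Let $G$ be a graph on at least two vertices and let $\overline{G}$ be its complement. Then $|\gamma^{DLD}(G)-\gamma^{DLD}(\overline{G})|\le 1$, and $\gamma^{DLD}(G)\ne\gamma^{DLD}(\overline{G})$ if and only if $G$ is a complete graph or an edgeless graph.
   Context: All graphs are finite, simple and undirected (not necessarily connected). For $u\in V$, $N(u)$ is the set of neighbours of $u$ and $N[u]=N(u)\cup\{u\}$. A code is a non-empty subset $C\subseteq V$; $I(C;u)=N[u]\cap C$ (computed in the relevant graph). A code $C$ is solid-locating-dominating if $I(C;u)\ne\emptyset$ for every $u\in V\setminus C$ and $I(C;u)\not\subseteq I(C;v)$ for all distinct $u,v\in V\setminus C$; $\gamma^{DLD}(G)$ is the minimum size of such a code in $G$. *)

(* Defs.v *)
(* A simple graph on a finite vertex type T is a symmetric,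
   irreflexive relation e : rel T. *)
From mathcomp Require Import all_boot.
Set Implicit Arguments. Unset Strict Implicit. Unset Printing Implicit Defensive.

Definition compl_graph (T : finType) (e : rel T) : rel T :=
  fun x y => (x != y) && ~~ e x y.

Definition cnbhd (T : finType) (e : rel T) (u : T) : {set T} :=
  [set v | (v == u) || e u v].

Definition Icode (T : finType) (e : rel T) (C : {set T}) (u : T) : {set T} :=
  cnbhd e u :&: C.

Definition is_DLD (T : finType) (e : rel T) (C : {set T}) : bool :=
  [&& C != set0,
      [forall u in ~: C, Icode e C u != set0] &
      [forall u in ~: C, forall v in ~: C,
          (u != v) ==> ~~ (Icode e C u \subset Icode e C v)]].

(* gamma^{DLD}: minimum size of a DLD code.  The default value #|T| is
   harmless whenever T is nonempty, since [set: T] is then a DLD code. *)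
Definition gammaDLD (T : finType) (e : rel T) : nat :=
  \big[minn/#|T|]_(C : {set T} | is_DLD e C) #|C|.

Definition complete_graph (T : finType) (e : rel T) : Prop :=
  forall u v : T, u != v -> e u v.

Definition edgeless_graph (T : finType) (e : rel T) : Prop :=
  forall u v : T, ~~ e u v.

(* Main.v *)
Require Import Defs.
From mathcomp Require Import all_boot.
From mathcomp Require Import zify.
From Stdlib Require Import FunctionalExtensionality.
Set Implicit Arguments. Unset Strict Implicit. Unset Printing Implicit Defensive.

Section S.
Variable T : finType.
Implicit Types (f : rel T) (C : {set T}).

Lemma DLDP f C : reflect [/\ C != set0,
  (forall u, u \notin C -> Icode f C u != set0) &
  (forall u v, u \notin C -> v \notin C -> u != v ->
      ~~ (Icode f C u \subset Icode f C v))] (is_DLD f C).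
Proof.
apply: (iffP and3P) => [[H1 /forallP H2 /forallP H3]|[H1 H2 H3]]; split => //.
- by move=> u Hu; have := H2 u; rewrite inE Hu.
- move=> u v Hu Hv Huv; have := H3 u; rewrite inE Hu /= => /forallP /(_ v).
  by rewrite inE Hv Huv.
- apply/forallP => u; apply/implyP; rewrite inE; exact: H2.
- apply/forallP => u; apply/implyP; rewrite inE => Hu; apply/forallP => v.
  apply/implyP; rewrite inE => Hv; apply/implyP; exact: H3.
Qed.

Lemma IcodeC f C u x : x \in Icode f C u -> x \in C.
Proof. by rewrite /Icode inE => /andP[]. Qed.

Lemma Icode_compl f C u : u \notin C ->
  Icode (compl_graph f) C u = C :\: Icode f C u.
Proof.
move=> Hu; apply/setP => v; rewrite /Icode /cnbhd /compl_graph !inE.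
case vC: (v \in C); rewrite ?andbF ?andbT //=.
have vu : (v == u) = false by apply/negbTE; apply: contraNneq Hu => <-.
by rewrite vu /= eq_sym vu.
Qed.

Lemma pw_nonempty (A : {set T}) (K : T -> {set T}) : 1 < #|A| ->
  (forall u v, u \in A -> v \in A -> u != v -> ~~ (K u \subset K v)) ->
  forall u, u \in A -> K u != set0.
Proof.
move=> hA H u uA.
have : 0 < #|A :\ u| by move: hA; rewrite (cardsD1 u) uA.
rewrite card_gt0 => /set0Pn [v]; rewrite !inE => /andP[vu vA].
apply/negP => /eqP K0; move: (H u v uA vA); rewrite eq_sym vu K0 sub0set.
by move/(_ isT).
Qed.

Lemma DLD_compl f C : 1 < #|~: C| -> is_DLD f C -> is_DLD (compl_graph f) C.
Proof.
move=> hC /DLDP [H1 H2 H3].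
have HJ : forall u v, u \notin C -> v \notin C -> u != v ->
      ~~ (Icode (compl_graph f) C u \subset Icode (compl_graph f) C v).
  move=> u v Hu Hv Huv; rewrite !Icode_compl //.
  have := H3 v u Hv Hu; rewrite eq_sym Huv => /(_ isT).
  apply: contraNN => /subsetP sub.
  apply/subsetP => x xIv; have xC := IcodeC xIv.
  apply/negPn/negP => xIu; have := sub x; rewrite !in_setD xIu xC xIv.
  by move/(_ isT).
apply/DLDP; split => // u Hu.
apply: (pw_nonempty (A := ~: C)) => //; last by rewrite inE.
by move=> a b; rewrite !inE; apply: HJ.
Qed.

Lemma compl_complK (e : rel T) : irreflexive e -> compl_graph (compl_graph e) = e.
Proof.
move=> irr; apply: functional_extensionality => x.
apply: functional_extensionality => y; rewrite /compl_graph.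
case: (eqVneq x y) => [->|xy]; first by rewrite irr.
by rewrite /= negbK.
Qed.

Lemma DLD_one f u v : u != v -> f u v -> is_DLD f [set~ u].
Proof.
move=> uv fuv; apply/DLDP; split.
- by apply/set0Pn; exists v; rewrite !inE eq_sym.
- move=> w; rewrite !inE negbK => /eqP ->; apply/set0Pn; exists v.
  by rewrite /Icode /cnbhd !inE fuv orbT eq_sym.
- move=> w1 w2; rewrite !inE !negbK => /eqP -> /eqP ->; by rewrite eqxx.
Qed.

Lemma DLD_forced f C : is_DLD f C -> (forall u v, u != v -> ~~ f u v) ->
  C = setT.
Proof.
move=> /DLDP [_ H2 _] H; apply/setP => u; rewrite inE.
apply/negPn/negP => Hu; move: (H2 u Hu) => /set0Pn [v].
rewrite /Icode /cnbhd !inE => /andP[/orP[/eqP vu|fuv] vC].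
  by move: Hu; rewrite -vu vC.
have uv : u != v by apply: contraNneq Hu => ->.
by move: (H u v uv); rewrite fuv.
Qed.

Lemma DLDT f : 0 < #|T| -> is_DLD f setT.
Proof.
move=> hT; apply/DLDP; split.
- by apply/set0Pn; move/card_gt0P: hT => [x _]; exists x; rewrite inE.
- by move=> u; rewrite inE.
- by move=> u v; rewrite inE.
Qed.

Lemma big_le (s : seq {set T}) (P : pred {set T}) (F : {set T} -> nat) n C :
  C \in s -> P C -> \big[minn/n]_(i <- s | P i) F i <= F C.
Proof.
elim: s => // a s IH; rewrite inE big_cons => /orP[/eqP <-|Cs] PC.
  by rewrite PC geq_minl.
case: (P a); last exact: IH.
by apply: leq_trans (geq_minr _ _) (IH Cs PC).
Qed.

Lemma gam_le f C : is_DLD f C -> gammaDLD f <= #|C|.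
Proof. by move=> H; apply: big_le => //; rewrite mem_index_enum. Qed.

Lemma gam_ex f : 0 < #|T| -> exists C, is_DLD f C /\ #|C| = gammaDLD f.
Proof.
move=> hT.
have : gammaDLD f = #|T| \/ exists C, is_DLD f C /\ gammaDLD f = #|C|.
  rewrite /gammaDLD.
  apply: (big_ind (fun m => m = #|T| \/ exists C, is_DLD f C /\ m = #|C|)); [by left| |by move=> C HC; right; exists C].
  move=> x y Hx Hy; case: (leqP x y) => h.
    by [].
  by [].
case=> [->|[C [HC ->]]]; last by exists C.
by exists setT; split; [exact: DLDT | rewrite cardsT].
Qed.

End S.

Theorem mainTheorem9 (T : finType) (e : rel T)
  (e_sym : symmetric e) (e_irr : irreflexive e) (hT : 1 < #|T|) :
  (gammaDLD e <= (gammaDLD (compl_graph e)).+1 /\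
   gammaDLD (compl_graph e) <= (gammaDLD e).+1) /\
  (gammaDLD e <> gammaDLD (compl_graph e) <->
   complete_graph e \/ edgeless_graph e).
Proof.
have hT0 : 0 < #|T| by apply: ltnW.
have gn : gammaDLD e <= #|T| by rewrite -cardsT; apply: gam_le; apply: DLDT.
have gn' : gammaDLD (compl_graph e) <= #|T| by rewrite -cardsT; apply: gam_le; apply: DLDT.
have [C [HC cC]] := gam_ex e hT0.
have [C' [HC' cC']] := gam_ex (compl_graph e) hT0.
set g := gammaDLD e in gn cC *; set g' := gammaDLD (compl_graph e) in gn' cC' *.
have A1 : g <= #|T| - 2 -> g' <= g.
  move=> h; rewrite -cC; apply: gam_le; apply: DLD_compl => //.
  move: (cardsCs C); lia.
have A2 : g' <= #|T| - 2 -> g <= g'.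
  move=> h; rewrite -cC' /g -(compl_complK e_irr); apply: gam_le.
  apply: DLD_compl => //; move: (cardsCs C'); lia.
have one : forall f : rel T, forall u v, u != v -> f u v -> gammaDLD f <= #|T| - 1.
  move=> f u v uv fuv; have := gam_le (DLD_one uv fuv); rewrite cardsC1; lia.
split; first by lia.
split.
- move=> neq.
  have [hg|hg] : g' = #|T| \/ g = #|T| by lia.
  + left => u v uv; apply/negPn/negP => nuv.
    have := one (compl_graph e) u v uv; rewrite /compl_graph uv nuv => /(_ isT).
    rewrite -/g'; lia.
  + right => u v; apply/negP => euv.
    have uv : u != v by apply: contraTneq euv => ->; rewrite e_irr.
    have := one e u v uv euv; rewrite -/g; lia.
- have [u [v [_ _ uv]]] := card_gt1P hT.
  case=> [Hc|He].
  + have := DLD_forced HC' => /(_ _) Ce.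
    have : C' = setT by apply: Ce => a b ab; rewrite /compl_graph ab Hc.
    move=> CT; move: cC'; rewrite CT cardsT => gT.
    have := one e u v uv (Hc u v uv); rewrite -/g; lia.
  + have : C = setT by apply: (DLD_forced HC) => a b _; apply: He.
    move=> CT; move: cC; rewrite CT cardsT => gT.
    have := one (compl_graph e) u v uv; rewrite /compl_graph uv He => /(_ isT).
    rewrite -/g'; lia.
Qed.
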